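(* Let $\omega$ be an LTL$_f$ formula and $\mathcal{E}$ an LTL$_f$ environment specification over $\mathcal{Y}\cup\mathcal{X}$, and let $\sigma_{ag}$ be an agent strategy. Then: (1) The agent anticipates passive responsibility for $\omega$ under $\sigma_{ag}$ and $\mathcal{E}$ if and only if $\sigma_{ag}$ is not dominant for $\neg\omega$ under $\mathcal{E}$. (2) The agent anticipates inexcusable passive responsibility for $\omega$ under $\sigma_{ag}$ and $\mathcal{E}$ if and only if $\sigma_{ag}$ is not best-effort for $\neg\omega$ under $\mathcal{E}$. (3) The agent anticipates active responsibility for $\omega$ under $\sigma_{ag}$ and $\mathcal{E}$ if and only if $\sigma_{ag}$ is winning for $\omega$ under $\mathcal{E}$ and there exists an agent strategy $\sigma'_{ag}$ that is weak for $\neg\omega$ under $\mathcal{E}$.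
   Context: Let $\mathcal{Y}$ and $\mathcal{X}$ be disjoint finite sets of atomic propositions, controlled by the agent and the environment respectively. LTL$_f$ formulas over $\mathcal{Y}\cup\mathcal{X}$ (built from atoms, $\neg$, $\wedge$, strong next $\circ$, until $\mathcal{U}$; weak next $\bullet\omega:=\neg\circ\neg\omega$) are interpreted over finite nonempty traces over $2^{\mathcal{Y}\cup\mathcal{X}}$ with the standard finite-trace semantics ($\pi,i\models\circ\omega$ iff $i<|\pi|-1$ and $\pi,i+1\models\omega$); $\pi\models\omega$ means $\pi,0\models\omega$. An agent strategy is a function $\sigma_{ag}:(2^{\mathcal{X}})^*\to 2^{\mathcal{Y}}\cup\{\mathit{stop}\}$ that is stopping: along every infinite sequence of environment moves there is $k$ such that $\sigma_{ag}$ returns $\mathit{stop}$ on all prefixes of length $\ge k$ and not on shorter prefixes. An environment strategy is a function $\sigma_{env}:(2^{\mathcal{Y}})^+\to 2^{\mathcal{X}}$. The agent moves first. The play $\mathrm{play}(\sigma_{ag},\sigma_{env})$ is the shortest finite trace $(Y_0\cup X_0)\cdots(Y_n\cup X_n)$ with $Y_0=\sigma_{ag}(\lambda)$, $Y_i=\sigma_{ag}(X_0\cdots X_{i-1})$ for $i>0$, $X_j=\sigma_{env}(Y_0\cdots Y_j)$ for all $j$, and $\sigma_{ag}(X_0\cdots X_n)=\mathit{stop}$. An environment strategy enforces an LTL$_f$ formula $\psi$ if for every agent strategy, every finite nonempty prefix of the (possibly infinite) sequence of moves generated by the two strategies satisfies $\psi$. An environment specification is an LTL$_f$ formula $\mathcal{E}$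 enforced by at least one environment strategy; $\Sigma_{\mathcal{E}}$ denotes the set of environment strategies enforcing $\mathcal{E}$. An agent strategy $\sigma_{ag}$ is winning for $\omega$ under $\mathcal{E}$ if $\mathrm{play}(\sigma_{ag},\sigma_{env})\models\omega$ for all $\sigma_{env}\in\Sigma_{\mathcal{E}}$; it is weak for $\omega$ under $\mathcal{E}$ if this holds for some $\sigma_{env}\in\Sigma_{\mathcal{E}}$. For agent strategies $\sigma_1,\sigma_2$: $\sigma_1\ge_{\omega|\mathcal{E}}\sigma_2$ ($\sigma_1$ dominates $\sigma_2$) if for every $\sigma_{env}\in\Sigma_{\mathcal{E}}$, $\mathrm{play}(\sigma_2,\sigma_{env})\models\omega$ implies $\mathrm{play}(\sigma_1,\sigma_{env})\models\omega$; $\sigma_1>_{\omega|\mathcal{E}}\sigma_2$ if $\sigma_1\ge_{\omega|\mathcal{E}}\sigma_2$ and not $\sigma_2\ge_{\omega|\mathcal{E}}\sigma_1$. $\sigma_{ag}$ is dominant for $\omega$ under $\mathcal{E}$ if $\sigma_{ag}\ge_{\omega|\mathcal{E}}\sigma'$ for every agent strategy $\sigma'$; it is best-effort for $\omega$ under $\mathcal{E}$ if there is no agent strategy $\sigma'$ with $\sigma'>_{\omega|\mathcal{E}}\sigma_{ag}$. Responsibility notions. The agent is attributed passive responsibility for $\omega$ under $\sigma_{ag}$ and $\sigma_{env}\in\Sigma_{\mathcal{E}}$ if $\mathrm{play}(\sigma_{ag},\sigma_{env})\models\omega$ and there is an agent strategy $\sigma'_{ag}$ with $\mathrm{play}(\sigma'_{ag},\sigma_{env})\models\neg\omega$;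 it is attributed inexcusable passive responsibility if moreover such $\sigma'_{ag}$ can be chosen with $\sigma'_{ag}\ge_{\neg\omega|\mathcal{E}}\sigma_{ag}$. The agent anticipates (inexcusable) passive responsibility for $\omega$ under $\sigma_{ag}$ and $\mathcal{E}$ if there is $\sigma_{env}\in\Sigma_{\mathcal{E}}$ such that it is attributed (inexcusable) passive responsibility for $\omega$ under $\sigma_{ag}$ and $\sigma_{env}$. The agent anticipates (equivalently, is attributed) active responsibility for $\omega$ under $\sigma_{ag}$ and $\mathcal{E}$ if $\mathrm{play}(\sigma_{ag},\sigma_{env})\models\omega$ for every $\sigma_{env}\in\Sigma_{\mathcal{E}}$ and there exist an agent strategy $\sigma'_{ag}$ and $\sigma'_{env}\in\Sigma_{\mathcal{E}}$ with $\mathrm{play}(\sigma'_{ag},\sigma'_{env})\models\neg\omega$. *)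

(* Defs.v *)
From mathcomp Require Import all_boot.
Set Implicit Arguments. Unset Strict Implicit. Unset Printing Implicit Defensive.

(* Atomic propositions: agent-controlled ones of type Y, environment-controlled
   ones of type X; atoms are Y + X, so the two sets are disjoint. *)
Inductive ltlf (Y X : Type) : Type :=
  | Atom of (Y + X)
  | Not of ltlf Y X
  | And of ltlf Y X & ltlf Y X
  | Next of ltlf Y X                (* strong next *)
  | Until of ltlf Y X & ltlf Y X.

Section Semantics.
Variables Y X : finType.

Definition letter := ({set Y} * {set X})%type.
Definition trace := seq letter.

Fixpoint sat_at (pi : trace) (i : nat) (phi : ltlf Y X) : Prop :=
  match phi with
  | Atom (inl y) => y \in (nth (set0, set0) pi i).1
  | Atom (inr x) => x \in (nth (set0, set0) pi i).2
  | Not f => ~ sat_at pi i f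
  | And f g => sat_at pi i f /\ sat_at pi i g
  | Next f => i.+1 < size pi /\ sat_at pi i.+1 f
  | Until f g => exists j, [/\ i <= j, j < size pi, sat_at pi j g &
                            forall k, i <= k -> k < j -> sat_at pi k f]
  end.

Definition sat (pi : trace) (phi : ltlf Y X) : Prop := 0 < size pi /\ sat_at pi 0 phi.

(* Agent functions: None encodes "stop". *)
Definition ag_fun := seq {set X} -> option {set Y}.
(* Environment strategies (2^Y)^+ -> 2^X; the value on the empty history is
   irrelevant (never used). *)
Definition env_fun := seq {set Y} -> {set X}.

(* stopping: along every infinite sequence e of environment moves there is k
   such that the strategy stops exactly on the prefixes of length >= k.
   Plays are nonempty traces, so k >= 1. *)
Definition is_agent_strategy (sag : ag_fun) : Prop :=
  forall e : nat -> {set X}, exists k, 0 < k /\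
    forall n, sag (mkseq e n) = None <-> k <= n.

(* The first n rounds of interaction (agent moves first; a default empty move
   is used if the agent has already stopped -- never relevant for plays). *)
Fixpoint hist (sag : ag_fun) (senv : env_fun) (n : nat) : trace :=
  match n with
  | 0 => [::]
  | n'.+1 =>
      let h := hist sag senv n' in
      let y := odflt set0 (sag (map snd h)) in
      rcons h (y, senv (rcons (map fst h) y))
  end.

(* pi is play(sag, senv): the shortest (nonempty) trace generated by the two
   strategies at whose end the agent stops. *)
Definition is_play (sag : ag_fun) (senv : env_fun) (pi : trace) : Prop :=
  exists n, [/\ pi = hist sag senv n.+1,
               sag (map snd pi) = None &
               forall m, m <= n -> sag (map snd (hist sag senv m)) <> None].

Definition play_sat (sag : ag_fun) (senv : env_fun) (phi : ltlf Y X) : Prop :=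
  exists pi, is_play sag senv pi /\ sat pi phi.

Definition enforces (senv : env_fun) (psi : ltlf Y X) : Prop :=
  forall sag, is_agent_strategy sag ->
  forall pi, is_play sag senv pi ->
  forall n, 0 < n -> n <= size pi -> sat (take n pi) psi.

Definition is_env_spec (E : ltlf Y X) : Prop := exists senv, enforces senv E.

Definition winning (sag : ag_fun) (w E : ltlf Y X) : Prop :=
  forall senv, enforces senv E -> play_sat sag senv w.

Definition weak (sag : ag_fun) (w E : ltlf Y X) : Prop :=
  exists senv, enforces senv E /\ play_sat sag senv w.

Definition dominates (s1 s2 : ag_fun) (w E : ltlf Y X) : Prop :=
  forall senv, enforces senv E -> play_sat s2 senv w -> play_sat s1 senv w.

Definition strictly_dominates (s1 s2 : ag_fun) (w E : ltlf Y X) : Prop :=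
  dominates s1 s2 w E /\ ~ dominates s2 s1 w E.

Definition dominant (sag : ag_fun) (w E : ltlf Y X) : Prop :=
  forall s', is_agent_strategy s' -> dominates sag s' w E.

Definition best_effort (sag : ag_fun) (w E : ltlf Y X) : Prop :=
  ~ exists s', is_agent_strategy s' /\ strictly_dominates s' sag w E.

Definition attr_passive (sag : ag_fun) (senv : env_fun) (w : ltlf Y X) : Prop :=
  play_sat sag senv w /\
  exists s', is_agent_strategy s' /\ play_sat s' senv (Not w).

Definition attr_inexcusable_passive (sag : ag_fun) (senv : env_fun) (w E : ltlf Y X) : Prop :=
  play_sat sag senv w /\
  exists s', [/\ is_agent_strategy s', play_sat s' senv (Not w) &
                 dominates s' sag (Not w) E].

Definition anticipates_passive (sag : ag_fun) (w E : ltlf Y X) : Prop :=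
  exists senv, enforces senv E /\ attr_passive sag senv w.

Definition anticipates_inexcusable_passive (sag : ag_fun) (w E : ltlf Y X) : Prop :=
  exists senv, enforces senv E /\ attr_inexcusable_passive sag senv w E.

Definition anticipates_active (sag : ag_fun) (w E : ltlf Y X) : Prop :=
  (forall senv, enforces senv E -> play_sat sag senv w) /\
  exists s' senv', [/\ is_agent_strategy s', enforces senv' E &
                      play_sat s' senv' (Not w)].

End Semantics.

(* Main.v *)
Require Import Defs.
From mathcomp Require Import all_boot.
From Stdlib Require Import Classical.

Section Aux.
Variables Y X : finType.

Lemma hist_size (sag : ag_fun Y X) (senv : env_fun Y X) n : size (hist sag senv n) = n.
Proof. by elim: n => //= n IH; rewrite size_rcons IH. Qed.

Lemma hist_snd (sag : ag_fun Y X) (senv : env_fun Y X) m :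
  map snd (hist sag senv m) =
  mkseq (fun i => (nth (set0, set0) (hist sag senv i.+1) i).2) m.
Proof.
elim: m => // m IH.
rewrite mkseqS -IH.
by rewrite [hist _ _ m.+1]/= map_rcons nth_rcons hist_size ltnn eqxx.
Qed.

Lemma play_exists (sag : ag_fun Y X) (senv : env_fun Y X) :
  is_agent_strategy sag -> exists pi, is_play sag senv pi.
Proof.
move=> Hs.
have [k [k0 Hk]] := Hs (fun i => (nth (set0, set0) (hist sag senv i.+1) i).2).
exists (hist sag senv k); exists k.-1.
rewrite prednK //; split => //.
  by rewrite hist_snd; apply/(Hk k).
move=> m Hm; rewrite hist_snd => /(Hk m).
by move: Hm; rewrite -ltnS prednK // => H1 H2; by move: (leq_ltn_trans H2 H1); rewrite ltnn.
Qed.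

Lemma play_unique (sag : ag_fun Y X) (senv : env_fun Y X) pi1 pi2 :
  is_play sag senv pi1 -> is_play sag senv pi2 -> pi1 = pi2.
Proof.
move=> [n1 [-> H1 H1']] [n2 [-> H2 H2']].
have: n1 <= n2.
  by case: (leqP n1 n2) => // /H1' .
have: n2 <= n1.
  by case: (leqP n2 n1) => // /H2' .
by move=> a b; have -> : n1 = n2 by apply/eqP; rewrite eqn_leq a b.
Qed.

Lemma play_size (sag : ag_fun Y X) (senv : env_fun Y X) pi :
  is_play sag senv pi -> 0 < size pi.
Proof. by move=> [n [-> _ _]]; rewrite hist_size. Qed.

Lemma play_not (sag : ag_fun Y X) (senv : env_fun Y X) w :
  is_agent_strategy sag ->
  (play_sat sag senv (Not w) <-> ~ play_sat sag senv w).
Proof.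
move=> Hs; split.
  move=> [pi [Hp [_ Hn]]] [pi' [Hp' [_ Hw]]].
  by apply: Hn; rewrite (play_unique _ _ _ _ Hp Hp').
move=> Hn; have [pi Hp] := play_exists _ senv Hs.
exists pi; split => //; split; first exact: play_size _ _ _ Hp.
by move=> Hw; apply: Hn; exists pi; split => //; split => //; exact: play_size _ _ _ Hp.
Qed.

Lemma play_notnot (sag : ag_fun Y X) (senv : env_fun Y X) w :
  is_agent_strategy sag ->
  (~ play_sat sag senv (Not w) <-> play_sat sag senv w).
Proof.
move=> Hs; rewrite play_not //; split; last by auto.
by apply: NNPP.
Qed.

End Aux.

Theorem theorem1 (Y X : finType) (w E : ltlf Y X) (sag : ag_fun Y X) :
  is_env_spec E -> is_agent_strategy sag ->
  [/\ anticipates_passive sag w E <-> ~ dominant sag (Not w) E,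
      anticipates_inexcusable_passive sag w E <-> ~ best_effort sag (Not w) E &
      anticipates_active sag w E <->
        (winning sag w E /\
         exists s', is_agent_strategy s' /\ weak s' (Not w) E)].
Proof.
move=> _ Hs; split.
- split.
    move=> [senv [He [Hw [s' [Hs' Hn]]]]] Hd.
    have := Hd s' Hs' senv He Hn.
    by move/(play_not _ _ _ _ _ Hs); apply.
  move=> Hd.
  apply: NNPP => Hna; apply: Hd => s' Hs' senv He Hn.
  apply: NNPP => Hn'; apply: Hna; exists senv; split => //; split.
    by apply/(play_notnot _ _ _ _ _ Hs).
  by exists s'.
- split.
    move=> [senv [He [Hw [s' [Hs' Hn Hdom]]]]] Hb.
    apply: Hb; exists s'; split => //; split => // Hd.
    have := Hd senv He Hn.
    by move/(play_not _ _ _ _ _ Hs); apply.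
  move=> Hb; apply: NNPP => Hna; apply: Hb => -[s' [Hs' [Hdom Hnd]]].
  apply: Hnd => senv He Hn.
  apply: NNPP => Hn'; apply: Hna; exists senv; split => //; split.
    by apply/(play_notnot _ _ _ _ _ Hs).
  by exists s'; split.
- split.
    move=> [Hwin [s' [senv [Hs' He Hn]]]]; split => //.
    by exists s'; split => //; exists senv.
  move=> [Hwin [s' [Hs' [senv [He Hn]]]]]; split => //.
  by exists s', senv.
Qed.
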